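(* Let $X$ be a real random variable taking values in the interval $\mathcal{I}\subseteq\mathbb{R}$, and let $h:\mathcal{I}\to\mathcal{J}$ have a non-decreasing upper tail with threshold $c\in(\inf\mathcal{I},\sup\mathcal{I})$. Let $h^{\star}=\sup_{x<c,\,x\in\mathcal{I}}h(x)$, $\pi_c=\mathbb{P}[h(X)\le h^{\star}]$, and define $\tilde h:\mathcal{I}\to\mathcal{J}$ by $\tilde h(x)=h^{\star}$ if $x<c$, $\tilde h(c)=\max\{h(c),h^{\star}\}$, and $\tilde h(x)=h(x)$ if $x>c$. Then $$\tilde h\big(F_X^{-1(\alpha)}(p)\big)=h\big(F_X^{-1(\alpha)}(p)\big)\quad\text{for all } p>\pi_c \text{ and } \alpha\in[0,1].$$
   Context: For a random variable $Y$ with cdf $F_Y$: $F_Y^{-1}(p)=\inf\{x\in\mathbb{R}: F_Y(x)\ge p\}$ (with $\inf\emptyset=+\infty$), $F_Y^{-1+}(p)=\sup\{x\in\mathbb{R}:F_Y(x)\le p\}$ (with $\sup\emptyset=-\infty$), and for $\alpha\in[0,1]$, $F_Y^{-1(\alpha)}(p)=(1-\alpha)F_Y^{-1}(p)+\alpha F_Y^{-1+}(p)$. $h$ is real-valued whose discontinuities (if any) are jumps at which it is left- or right-continuous. A function $h:\mathcal{I}\to\mathcal{J}$ has a non-decreasing upper tail if there exists $x'\in\mathcal{I}$ such that (1) $h(x)\le h(x')$ for all $x\in\mathcal{I}$ with $x<x'$, and (2) $h(x_1)\le h(x_2)$ for all $x_1,x_2\in\mathcal{I}$ with $x'\le x_1\le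 x_2$. Its threshold $c$ is the infimum of the (assumed nonempty) set of all such $x'$. *)

(* Defs.v *)
From HB Require Import structures.
From mathcomp Require Import all_boot all_order all_algebra.
From mathcomp Require Import all_classical all_reals all_analysis.
Set Implicit Arguments. Unset Strict Implicit. Unset Printing Implicit Defensive.
Import Order.TTheory GRing.Theory Num.Theory.
Import numFieldNormedType.Exports.
Local Open Scope classical_set_scope.
Local Open Scope ring_scope.

Section defs.
Context {R : realType}.

Definition jump_regular (I : interval R) (h : R -> R) : Prop :=
  forall x, x \in I ->
    (exists l : R, h @ within [set` I] x^'- --> l) /\
    (exists l : R, h @ within [set` I] x^'+ --> l) /\
    (h @ within [set` I] x^'- --> h x \/ h @ within [set` I] x^'+ --> h x).

(* x' witnesses that h : I -> R has a non-decreasing upper tail *)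
Definition ndut_point (I : interval R) (h : R -> R) (x' : R) : Prop :=
  x' \in I /\
  (forall x, x \in I -> x < x' -> h x <= h x') /\
  (forall x1 x2, x1 \in I -> x2 \in I -> x' <= x1 -> x1 <= x2 -> h x1 <= h x2).

Definition has_ndut (I : interval R) (h : R -> R) : Prop :=
  exists x', ndut_point I h x'.

Definition ndut_threshold (I : interval R) (h : R -> R) : \bar R :=
  ereal_inf (EFin @` [set x' | ndut_point I h x']).

Definition hstar (I : interval R) (h : R -> R) (c : R) : R :=
  sup (h @` [set x | x \in I /\ x < c]).

Definition htilde (I : interval R) (h : R -> R) (c : R) (x : R) : R :=
  if x < c then hstar I h c
  else if x == c then Num.max (h c) (hstar I h c)
  else h x.

End defs.

Section quantiles.
Context d {T : measurableType d} {R : realType} (P : probability T R).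
Local Open Scope ereal_scope.

(* F_X^{-1}(p) = inf {x | F_X(x) >= p}, inf of the empty set = +oo *)
Definition qinf (X : {RV P >-> R}) (p : R) : \bar R :=
  ereal_inf (EFin @` [set x | p%:E <= cdf X x]).

(* F_X^{-1+}(p) = sup {x | F_X(x) <= p}, sup of the empty set = -oo *)
Definition qsup (X : {RV P >-> R}) (p : R) : \bar R :=
  ereal_sup (EFin @` [set x | cdf X x <= p%:E]).

Definition qalpha (X : {RV P >-> R}) (alpha p : R) : \bar R :=
  ((1 - alpha)%R)%:E * qinf X p + alpha%:E * qsup X p.

End quantiles.

(* Main.v *)
Require Import Defs.
From HB Require Import structures.
From mathcomp Require Import all_boot all_order all_algebra.
From mathcomp Require Import all_classical all_reals all_analysis.
From mathcomp Require Import measurable_realfun.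
From mathcomp Require Import lra.
Import Order.TTheory GRing.Theory Num.Theory.
Import numFieldNormedType.Exports.
Local Open Scope classical_set_scope.
Local Open Scope ring_scope.

Lemma ndut_above {R : realType} {I : interval R} {h : R -> R} {c : R} :
  ndut_threshold I h = c%:E -> forall x, x \in I -> c < x -> ndut_point I h x.
Proof.
move=> Hc x xI cx.
have : (ndut_threshold I h < x%:E)%E by rewrite Hc lte_fin.
move=> /ereal_inf_lt [_ [x' Hx' <-]]; rewrite lte_fin => x'x.
case: Hx' => x'I [H1 H2].
split => //; split.
- move=> z zI zx; have [zx'|x'z] := ltP z x'.
    exact: le_trans (H1 _ zI zx') (H2 _ _ x'I xI (lexx _) (ltW x'x)).
  by apply: H2 => //; exact: ltW.
- move=> x1 x2 x1I x2I xx1 x12; apply: H2 => //.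
  exact: le_trans (ltW x'x) xx1.
Qed.

Lemma hstar_ub (R : realType) (I : interval R) (h : R -> R) (c : R) :
  ndut_threshold I h = c%:E -> (exists a, a \in I /\ a < c) -> (exists b, b \in I /\ c < b) ->
  forall x, x \in I -> x < c -> h x <= hstar I h c.
Proof.
move=> Hc [a [aI ac]] [b [bI cb]] x xI xc.
have [_ [Hb _]] := ndut_above Hc b bI cb.
apply: sup_upper_bound; last by exists x.
split; first by exists (h a), a.
exists (h b) => _ [y [yI yc] <-]; apply: Hb => //; exact: lt_trans yc cb.
Qed.

Lemma hstar_down {R : realType} {I : interval R} {h : R -> R} {c : R} :
  ndut_threshold I h = c%:E -> (exists a, a \in I /\ a < c) -> (exists b, b \in I /\ c < b) ->
  forall x y, x \in I -> y \in I -> y <= x -> h x <= hstar I h c -> h y <= hstar I h c.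
Proof.
move=> Hc Ha Hb x y xI yI yx hx.
have [yc|cy] := ltP y c; first exact: hstar_ub.
move: yx; rewrite le_eqVlt => /orP[/eqP -> //|yx].
have [_ [Hx _]] := ndut_above Hc x xI (le_lt_trans cy yx).
exact: le_trans (Hx _ yI yx) hx.
Qed.

Lemma S_meas {R : realType} {I : interval R} {h : R -> R} {c : R} :
  ndut_threshold I h = c%:E -> (exists a, a \in I /\ a < c) -> (exists b, b \in I /\ c < b) ->
  measurable [set x | x \in I /\ h x <= hstar I h c].
Proof.
move=> Hc Ha Hb; apply: is_interval_measurable => a b [aI ha] [bI hb] z /andP[az zb].
have zI : z \in I by apply: (interval_is_interval aI bI); rewrite az zb.
split => //; exact: hstar_down Hc Ha Hb b z bI zI zb hb.
Qed.

Theorem lemma3p4 (d : measure_display) (T : measurableType d) (R : realType)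
  (P : probability T R) (X : {RV P >-> R}) (I : interval R) (h : R -> R) (c : R) :
  (forall w, X w \in I) ->
  jump_regular I h ->
  has_ndut I h ->
  ndut_threshold I h = c%:E ->
  (exists a, a \in I /\ a < c) -> (exists b, b \in I /\ c < b) ->
  let pi_c := fine (P [set w | h (X w) <= hstar I h c]) in
  forall p alpha : R, pi_c < p -> p < 1 -> 0 <= alpha <= 1 ->
    htilde I h c (fine (qalpha X alpha p)) = h (fine (qalpha X alpha p)).
Proof.
move=> XI _ Hn Hc Ha Hb pi_c p alpha pic p1 /andP[a0 a1].
set S := [set x | x \in I /\ h x <= hstar I h c].
have mS : measurable S := S_meas Hc Ha Hb.
have GE : [set w | h (X w) <= hstar I h c] = X @^-1` S.
  by apply/seteqP; split => w /=; [move=> hw; split | case].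
have mG : measurable (X @^-1` S) := measurable_funPTI X mS.
have PG : P (X @^-1` S) = pi_c%:E by rewrite /pi_c GE fineK // fin_num_measure.
have cdf_fin x : cdf X x = (fine (cdf X x))%:E.
  by rewrite fineK // fin_num_measure.
have cdf_lt x : x < c -> (cdf X x < p%:E)%E.
  move=> xc; apply: (@le_lt_trans _ _ (P (X @^-1` S))); last by rewrite PG lte_fin.
  have -> : cdf X x = P (X @^-1` `]-oo, x]) by [].
  apply: le_measure; rewrite ?inE //.
    exact: measurable_funPTI.
  move=> w /=; rewrite in_itv /= => Xw; split => //.
  exact: hstar_ub Hc Ha Hb _ (XI w) (le_lt_trans Xw xc).
have cdf_c : h c < hstar I h c -> (cdf X c <= pi_c%:E)%E.
  move=> hlt; rewrite -PG.
  have -> : cdf X c = P (X @^-1` `]-oo, c]) by [].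
  apply: le_measure; rewrite ?inE //.
    exact: measurable_funPTI.
  move=> w /=; rewrite in_itv /= => Xw; split => //.
  move: Xw; rewrite le_eqVlt => /orP[/eqP ->|Xw]; first exact: ltW.
  exact: hstar_ub Hc Ha Hb _ (XI w) Xw.
have [M HM] : exists M, forall x, M <= x -> (p%:E < cdf X x)%E.
  have := @cvgr_gt _ _ _ _ _ _ (fine_cvg (cvg_cdfy1 X)) _ p1.
  case=> M [Mr HM]; exists (M + 1) => x Mx.
  rewrite cdf_fin lte_fin; apply: (HM x); lra.
have qi_ge : (c%:E <= qinf X p)%E.
  apply: le_ereal_inf_tmp => _ [z Hz <-]; rewrite lee_fin leNgt; apply/negP => zc.
  by have := cdf_lt z zc; rewrite ltNge Hz.
have qi_le : (qinf X p <= M%:E)%E.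
  by apply: ge_ereal_inf; exists M%:E => //; exists M => //; apply/ltW/HM.
have [i Hi] : exists i, qinf X p = i%:E.
  move: qi_ge qi_le; case: (qinf X p) => [i| |] // _ _; by exists i.
have qs_ge : ((c - 1)%:E <= qsup X p)%E.
  by apply: ereal_sup_ubound; exists (c - 1) => //; apply/ltW/cdf_lt; lra.
have qs_le : (qsup X p <= M%:E)%E.
  apply: ge_ereal_sup => _ [z Hz <-]; rewrite lee_fin leNgt; apply/negP => Mz.
  by have := HM z (ltW Mz); rewrite ltNge Hz.
have [s Hs] : exists s, qsup X p = s%:E.
  move: qs_ge qs_le; case: (qsup X p) => [s| |] // _ _; by exists s.
have ic : c <= i by rewrite -lee_fin -Hi.
have sc : c <= s.
  rewrite leNgt; apply/negP => sc.
  have : (((s + c) / 2)%:E <= qsup X p)%E.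
    by apply: ereal_sup_ubound; exists ((s + c) / 2) => //; apply/ltW/cdf_lt; lra.
  rewrite Hs lee_fin; lra.
have -> : qalpha X alpha p = ((1 - alpha) * i + alpha * s)%:E.
  by rewrite /qalpha Hi Hs -!EFinM -EFinD.
rewrite /= /htilde.
have qc : c <= (1 - alpha) * i + alpha * s by nra.
rewrite ltNge qc /=.
case: eqP => [qE|] //.
rewrite qE max_l //.
rewrite leNgt; apply/negP => hlt.
have Fx : forall x, c < x -> (p%:E <= cdf X x)%E.
  move=> x cx; have [a_lt|a_ge] := ltP alpha 1.
    have ieq : i = c by nra.
    have : (qinf X p < x%:E)%E by rewrite Hi lte_fin ieq.
    move/ereal_inf_lt => [_ [y Hy <-]]; rewrite lte_fin => yx.
    exact: le_trans Hy (cdf_nondecreasing X (ltW yx)).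
  have seq : s = c by nra.
  rewrite leNgt; apply/negP => Hx.
  have : (x%:E <= qsup X p)%E.
    by apply: ereal_sup_ubound; exists x => //; exact: ltW.
  rewrite Hs lee_fin; lra.
have : (p%:E <= cdf X c)%E.
  have Hrc := @cdf_right_continuous _ _ _ P X c.
  apply: (cvge_to_ge Hrc).
  near=> x; apply: Fx; near: x; exact: nbhs_right_gt.
move=> /le_trans /(_ (cdf_c hlt)); rewrite lee_fin; lra.
Unshelve. all: by end_near.
Qed.
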